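(* For every $d\ge 0$, the face poset $C^d$ of the $d$-dimensional hypercube satisfies $$\mathcal{M}_{C^d}(z)=(3-2z)^d-z(2-z)^d+1.$$
   Context: The face poset of a convex polytope with vertex set $V$ is the set of vertex sets of its faces (including the whole polytope) together with $\emptyset$, ordered by inclusion, ranked by dimension ($|\emptyset|=-1$). The Möbius function $\mu$ is $\mu[p,p]=1$, $\mu[p,q]=-\sum_{p\le s<q}\mu[p,s]$ for $p<q$, $0$ if $p\not\le q$; the Möbius polynomial is $\mathcal{M}_P(z)=\sum_{p\le q\in P}\mu[p,q]z^{|q|-|p|}$. *)

(* Defs.v *)
From HB Require Import structures.
From mathcomp Require Import all_boot all_order all_algebra.
Set Implicit Arguments. Unset Strict Implicit. Unset Printing Implicit Defensive.
Import Order.TTheory GRing.Theory Num.Theory.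
Local Open Scope ring_scope.

Section Mobius.
Variable T : finType.
Variable P : {set {set T}}.
Variable rk : {set T} -> int.

(* mobius_aux n p q: the recursion mu[p,p]=1,
   mu[p,q] = - sum_{s in P, p <= s < q} mu[p,s] for p < q, 0 otherwise;
   n is fuel (n = #|q|.+1 suffices since s \proper q forces #|s| < #|q|). *)
Fixpoint mobius_aux (n : nat) (p q : {set T}) : int :=
  match n with
  | 0 => 0
  | n'.+1 =>
      if p == q then 1
      else if p \subset q then
        - \sum_(s in P | (p \subset s) && (s \proper q)) mobius_aux n' p s
      else 0
  end.

Definition mobius (p q : {set T}) : int := mobius_aux #|q|.+1 p q.

Definition mobius_poly : {poly int} :=
  \sum_(p in P) \sum_(q in P | p \subset q)
      (mobius p q)%:P * 'X^(`|rk q - rk p|%N).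
End Mobius.

Definition cube_vertex (d : nat) := {ffun 'I_d -> bool}.

(* The nonempty face determined by a partial assignment f: coordinates i with
   f i = Some b are fixed to b, those with f i = None are free. *)
Definition cube_face (d : nat) (f : {ffun 'I_d -> option bool})
  : {set cube_vertex d} :=
  [set v : cube_vertex d | [forall i, if f i is Some b then v i == b else true]].

Definition cube_face_poset (d : nat) : {set {set cube_vertex d}} :=
  set0 |: [set cube_face f | f : {ffun 'I_d -> option bool}].

(* Dimension of a face: -1 for the empty face, otherwise the dimension of the
   affine hull of its vertex set, i.e. the number of coordinates on which the
   vertices of the face are not constant. *)
Definition cube_dim (d : nat) (q : {set cube_vertex d}) : int :=
  if q == set0 then -1
  else (#|[set i : 'I_d | [exists v in q, exists w in q, v i != w i]]|)%:Z.

(* Main.v *)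
Require Import Defs.
From HB Require Import structures.
From mathcomp Require Import all_boot all_order all_algebra.
From mathcomp Require Import zify ring.
Import GRing.Theory.
Local Open Scope ring_scope.
Set Implicit Arguments. Unset Strict Implicit.

Lemma sum_ob (R : nmodType) (F : option bool -> R) :
  \sum_(x : option bool) F x = F None + F (Some true) + F (Some false).
Proof.
rewrite (bigD1 None) //= (reindex_onto Some (odflt false)); last by move=> [b|] //.
rewrite (eq_bigl xpredT); last by move=> b; rewrite /= eqxx.
by rewrite big_bool addrA.
Qed.

Lemma mobius_aux_sg (T : finType) (P : {set {set T}}) (sg : {set T} -> int)
 (Hsq : forall p, sg p * sg p = 1)
 (Hsum : forall p q, p \in P -> q \in P -> p \proper q ->
    \sum_(s in P | (p \subset s) && (s \proper q)) sg s = - sg q) :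
 forall n p q, p \in P -> q \in P -> p \subset q -> (#|q| < n)%N ->
   mobius_aux P n p q = sg p * sg q.
Proof.
elim=> [//|n IH] p q pP qP pq qn /=.
case: eqP => [<-|pq']; first by rewrite Hsq.
rewrite pq (eq_bigr (fun s => sg p * sg s)).
  rewrite -mulr_sumr Hsum ?mulrN ?opprK //.
  by rewrite properEneq pq andbT; apply/eqP.
move=> s /andP[sP /andP[ps sq]]; apply: IH => //.
have := proper_card sq; lia.
Qed.

Lemma mobius_sg (T : finType) (P : {set {set T}}) (sg : {set T} -> int)
 (Hsq : forall p, sg p * sg p = 1)
 (Hsum : forall p q, p \in P -> q \in P -> p \proper q ->
    \sum_(s in P | (p \subset s) && (s \subset q)) sg s = 0) :
 forall p q, p \in P -> q \in P -> p \subset q ->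
   mobius P p q = sg p * sg q.
Proof.
move=> p q pP qP pq; apply: mobius_aux_sg => //.
move=> p' q' p'P q'P pq'.
have E : \sum_(s in P | (p' \subset s) && (s \subset q')) sg s =
   \sum_(s in P | (p' \subset s) && (s \proper q')) sg s + sg q'.
  rewrite (bigD1 q') /=; last by rewrite q'P subxx andbT; apply: proper_sub.
  rewrite addrC; congr (_ + _); apply: eq_bigl => s.
  by rewrite properEneq -!andbA; do 2 congr (_ && _); rewrite andbC.
apply/eqP; rewrite -subr_eq0 opprK -E; apply/eqP; exact: Hsum.
Qed.

Section Cube.
Variable d : nat.
Notation O := {ffun 'I_d -> option bool}.
Implicit Types f g h : O.

Definition le_face (f g : O) := [forall i, (g i == None) || (g i == f i)].
Definition mkv (f : O) b : cube_vertex d := [ffun i => if f i is Some c then c else b].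
Definition nf (f : O) := #|[set i | f i == None]|.

Lemma mkv_in f b : mkv f b \in cube_face f.
Proof. by rewrite inE; apply/forallP => i; rewrite ffunE; case: (f i). Qed.

Lemma face_neq0 f : cube_face f != set0.
Proof. by apply/set0Pn; exists (mkv f true); apply: mkv_in. Qed.

Lemma face_sub f g : (cube_face f \subset cube_face g) = le_face f g.
Proof.
apply/subsetP/forallP.
- move=> H i; apply/negPn/negP => Hn.
  have := H (mkv f (~~ (odflt true (g i)))) (mkv_in _ _).
  rewrite inE => /forallP/(_ i); rewrite ffunE.
  move: Hn; case: (g i) => [c|] //=; case: (f i) => [c'|] //=.
    by move=> Hn /eqP E; move: Hn; rewrite E eqxx.
  by case: c.
- move=> H v; rewrite !inE => /forallP Hv; apply/forallP => i.
  by move: (H i) (Hv i); case: (g i) => [c|] //= /eqP <-.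
Qed.

Lemma face_inj : injective (@cube_face d).
Proof.
move=> f g E; apply/ffunP=> i.
have := face_sub f g; have := face_sub g f; rewrite E subxx.
move=> /esym/forallP/(_ i) H1 /esym/forallP/(_ i) H2.
by move: H1 H2; case: (f i) (g i) => [a|] [b|] //= /eqP ->.
Qed.

Lemma dim_face f : cube_dim (cube_face f) = (nf f)%:Z.
Proof.
rewrite /cube_dim (negbTE (face_neq0 f)); congr (_%:Z); apply: eq_card => i.
rewrite !inE; case E: (f i) => [c|].
  apply/negbTE/negP; case/existsP => v /andP[vF /existsP[w /andP[wF]]].
  move: vF wF; rewrite !inE => /forallP/(_ i) + /forallP/(_ i).
  by rewrite E => /eqP -> /eqP ->; rewrite eqxx.
apply/existsP; exists (mkv f true); rewrite mkv_in /=; apply/existsP.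
by exists (mkv f false); rewrite mkv_in /= !ffunE E.
Qed.

Lemma nf_sum f : nf f = (\sum_i (f i == None : nat))%N.
Proof.
rewrite /nf -sum1_card big_mkcond /=; apply: eq_bigr => i _; rewrite inE.
by case: (f i == None).
Qed.

Lemma sumP (R : nmodType) (F : {set cube_vertex d} -> R) :
  \sum_(s in cube_face_poset d) F s = F set0 + \sum_(f : O) F (cube_face f).
Proof.
rewrite /cube_face_poset big_setU1 /=; last first.
  by apply/imsetP => -[f _ E]; have := face_neq0 f; rewrite -E eqxx.
by rewrite big_imset //; move=> f g _ _; apply: face_inj.
Qed.


Definition sg (q : {set cube_vertex d}) : int := (-1) ^+ (absz (cube_dim q + 1)).

Lemma sg0 : sg set0 = 1.
Proof. by rewrite /sg /cube_dim eqxx. Qed.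

Lemma sg_face f : sg (cube_face f) = - (-1) ^+ nf f.
Proof.
rewrite /sg dim_face.
have -> : absz ((nf f)%:Z + 1) = (nf f).+1 by lia.
by rewrite exprS mulN1r.
Qed.

Lemma sg_sq p : sg p * sg p = 1.
Proof. by rewrite -expr2 sqrr_sign. Qed.

Lemma forall_prod (R : comNzRingType) (I : finType) (B : I -> bool) :
  ([forall i, B i])%:R = \prod_i (B i)%:R :> R.
Proof.
case: (boolP [forall i, B i]) => [/forallP H | /forallPn [i Hi]].
  by rewrite big1 // => i _; rewrite H.
by rewrite (bigD1 i) //= (negbTE Hi) mul0r.
Qed.

Lemma signX_prod h :
  (-1) ^+ nf h = \prod_i (-1) ^+ (h i == None) :> int.
Proof. by rewrite prodrXr -nf_sum. Qed.

Lemma isum0 g :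
  \sum_(s in cube_face_poset d | (set0 \subset s) && (s \subset cube_face g)) sg s = 0.
Proof.
rewrite big_mkcondr sumP /= !sub0set /= sg0.
rewrite (eq_bigr (fun h => - \prod_i
    (((g i == None) || (g i == h i))%:R * (-1) ^+ (h i == None)))); last first.
  move=> h _; rewrite face_sub sg_face big_split /= -forall_prod -signX_prod.
  rewrite sub0set /= -/(le_face h g).
  by case: (le_face h g); rewrite /= ?mul1r ?mul0r ?oppr0.
rewrite sumrN -(bigA_distr_bigA (fun i (t : option bool) =>
  ((g i == None) || (g i == t))%:R * (-1) ^+ (t == None) : int)) /=.
rewrite big1 ?subrr // => i _.
by rewrite sum_ob; case: (g i) => [[]|].
Qed.


Lemma isum1 f g : f != g -> le_face f g ->
  \sum_(s in cube_face_poset d | (cube_face f \subset s) && (s \subset cube_face g)) sg s = 0.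
Proof.
move=> fg lefg.
rewrite big_mkcondr sumP /= subset0 (negbTE (face_neq0 f)) /= add0r.
rewrite (eq_bigr (fun h => - \prod_i
    ((((h i == None) || (h i == f i))%:R * ((g i == None) || (g i == h i))%:R)
      * (-1) ^+ (h i == None)))); last first.
  move=> h _; rewrite !face_sub sg_face !big_split /= -!forall_prod -signX_prod.
  rewrite -/(le_face h g) -/(le_face f h).
  by case: (le_face f h); case: (le_face h g); rewrite /= ?mul1r ?mul0r ?oppr0.
rewrite sumrN -(bigA_distr_bigA (fun i (t : option bool) =>
  (((t == None) || (t == f i))%:R * ((g i == None) || (g i == t))%:R)
      * (-1) ^+ (t == None) : int)) /=.
have [i Hi] : exists i, f i != g i.
  case: (boolP [exists i, f i != g i]) => [/existsP //|/existsPn H].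
  have E : f = g by apply/ffunP => i; apply/eqP; move: (H i); rewrite negbK.
  by move: fg; rewrite E eqxx.
have := forallP lefg i.
rewrite (bigD1 i) //= sum_ob; move: Hi.
by case: (f i) (g i) => [[]|] [[]|] //= _ _; rewrite mul0r oppr0.
Qed.


Lemma inP (p : {set cube_vertex d}) : p \in cube_face_poset d ->
  p = set0 \/ exists f, p = cube_face f.
Proof.
rewrite /cube_face_poset in_setU1 => /predU1P [->|/imsetP [f _ ->]]; first by left.
by right; exists f.
Qed.

Lemma cube_Hsum p q : p \in cube_face_poset d -> q \in cube_face_poset d -> p \proper q ->
  \sum_(s in cube_face_poset d | (p \subset s) && (s \subset q)) sg s = 0.
Proof.
move=> /inP [->|[f ->]] /inP [->|[g ->]] pq.
- by rewrite properE subxx in pq.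
- exact: isum0.
- by move/proper_sub: pq; rewrite subset0 (negbTE (face_neq0 f)).
- apply: isum1; last by rewrite -face_sub; apply: proper_sub.
  by apply/eqP => E; rewrite E properE subxx andbF in pq.
Qed.

Lemma cube_mobius p q : p \in cube_face_poset d -> q \in cube_face_poset d ->
  p \subset q -> mobius (cube_face_poset d) p q = sg p * sg q.
Proof. apply: mobius_sg; [exact: sg_sq | exact: cube_Hsum]. Qed.

End Cube.


Theorem mainTheorem9 (d : nat) :
  mobius_poly (cube_face_poset d) (@cube_dim d)
  = (3 - 2 *: 'X) ^+ d - 'X * (2 - 'X) ^+ d + 1 :> {poly int}.
Proof.
rewrite /mobius_poly.
rewrite (eq_bigr (fun p : {set cube_vertex d} => \sum_(q in cube_face_poset d)
   (if p \subset q then ((sg p * sg q)%:P * 'X^(absz (cube_dim q - cube_dim p)))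
    else 0))); last first.
  move=> p pP; rewrite big_mkcondr; apply: eq_bigr => q qP.
  by case: ifP => // pq; rewrite cube_mobius.
rewrite sumP.
have E0 : \sum_(q in cube_face_poset d)
   (if set0 \subset q then ((sg (set0 : {set cube_vertex d}) * sg q)%:P * 'X^(absz (cube_dim q - cube_dim (set0 : {set cube_vertex d}))))
    else 0) = 1 - 'X * (2 - 'X) ^+ d.
  rewrite sumP sub0set subrr (sg0 d) mulr1 polyC1 expr0 mulr1.
  rewrite (eq_bigr (fun g : {ffun 'I_d -> option bool} => - ('X * \prod_i (- 'X) ^+ (g i == None)))); last first.
    move=> g _; rewrite sub0set mul1r sg_face dim_face /cube_dim eqxx.
    have -> : absz ((nf g)%:Z - (- 1%:Z))%R = (nf g).+1 by lia.
    rewrite polyCN polyC_exp polyCN polyC1 prodrXr -nf_sum exprNn exprS.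
    by rewrite expr1n mulr1 mulNr mulrCA [in RHS]exprNn.
  rewrite sumrN -mulr_sumr -(bigA_distr_bigA (fun i (t : option bool) =>
     (- 'X) ^+ (t == None) : {poly int})) /=.
  rewrite (eq_bigr (fun _ => 2 - 'X)); last first.
    by move=> i _; rewrite sum_ob /= expr1 expr0; ring.
  by rewrite prodr_const card_ord.
have E1 : forall f : {ffun 'I_d -> option bool},
  \sum_(q in cube_face_poset d) (if cube_face f \subset q then
     (sg (cube_face f) * sg q)%:P * 'X^(absz (cube_dim q - cube_dim (cube_face f)))
     else 0)
  = \prod_i \sum_(t : option bool) (((t == None) || (t == f i))%:R *
        (- 'X) ^+ ((t == None) && (f i != None))).
  move=> f; rewrite sumP subset0 (negbTE (face_neq0 f)) add0r.
  rewrite (bigA_distr_bigA (fun i (t : option bool) => ((t == None) || (t == f i))%:R *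
        (- 'X) ^+ ((t == None) && (f i != None)) : {poly int})).
  apply: eq_bigr => g _.
  rewrite face_sub big_split /= -forall_prod -/(le_face f g).
  case: (boolP (le_face f g)) => [lefg|_]; last by rewrite mul0r.
  rewrite mul1r prodrXr.
  set c := (\sum_i _)%N.
  have Hn : nf g = (nf f + c)%N.
    rewrite !nf_sum -big_split; apply: eq_bigr => i _ /=.
    by have := forallP lefg i; case: (f i) (g i) => [[]|] [[]|].
  rewrite !sg_face !dim_face Hn mulrNN -exprD.
  have -> : absz ((nf f + c)%N%:Z - (nf f)%:Z)%R = c by lia.
  have -> : (-1) ^+ (nf f + (nf f + c)) = (-1) ^+ c :> int.
    by rewrite -signr_odd addnA addnn oddD odd_double signr_odd.
  by rewrite polyC_exp polyCN polyC1 [in RHS]exprNn.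
rewrite E0 (eq_bigr _ (fun f _ => E1 f)).
rewrite -(bigA_distr_bigA (fun i (a : option bool) => \sum_(t : option bool)
   (((t == None) || (t == a))%:R * (- 'X) ^+ ((t == None) && (a != None)) : {poly int}))) /=.
rewrite (eq_bigr (fun _ => 3 - 2 *: 'X)); last first.
  move=> i _; rewrite !sum_ob /= expr1 expr0 -mul_polyC.
  have -> : (2 : int)%:P = 2 :> {poly int} by rewrite -polyC_natr.
  ring.
rewrite prodr_const card_ord; ring.
Qed.
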